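(* For each $n\ge1$ and $\epsilon\ge0$, the set $D^\epsilon_n=\{\vec w\in\mathcal{W}^n:N^\epsilon_n(\vec w)\ne\emptyset\}$ is closed. Moreover, there exists a universally measurable map $\hat x:D^\epsilon_n\to\mathcal{X}^n$ such that $\hat x(\vec w)\in N^\epsilon_n(\vec w)$ for each $\vec w\in D^\epsilon_n$.
   Context: Standing assumptions: $\mathcal{X}$ compact metric space, $\mathcal{W}$ complete separable metric space; $\mathcal{P}(S)$ = Borel probability measures on $S$ with the weak topology. $\mathcal{C}$ maps $w$ to a nonempty closed $\mathcal{C}(w)\subset\mathcal{X}$, continuous in the sense that $\mathrm{Gr}(\mathcal{C})=\{(w,x):x\in\mathcal{C}(w)\}$ is closed and whenever $w_n\to w$, $x\in\mathcal{C}(w)$ there exist $n_k$, $x_{n_k}\in\mathcal{C}(w_{n_k})$ with $x_{n_k}\to x$. $F:\mathcal{P}(\mathcal{W}\times\mathcal{X})\times\mathcal{W}\times\mathcal{X}\to\mathbb{R}$ bounded continuous. $N^\epsilon_n(w_1,\dots,w_n)$ is the set of $\epsilon$-Nash equilibria with type vector $(w_1,\dots,w_n)$, i.e. of $\vec x=(x_1,\dots,x_n)\in\mathcal{X}^n$ with $x_i\in\mathcal{C}(w_i)$ and, writing $m=\frac1n\sum_k\delta_{(w_k,x_k)}$, $F(m,w_i,x_i)-\inf_{y\in\mathcal{C}(w_i)}F(m+\frac1n(\delta_{(w_i,y)}-\delta_{(w_i,x_i)}),w_i,y)\le\epsilon$ for all $i$. *)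

(* Defs.v *)
From HB Require Import structures.
From mathcomp Require Import all_boot all_order all_algebra.
From mathcomp Require Import all_classical all_reals all_analysis.
Set Implicit Arguments. Unset Strict Implicit. Unset Printing Implicit Defensive.
Import Order.TTheory GRing.Theory Num.Theory.
Import numFieldTopology.Exports.
Local Open Scope classical_set_scope.
Local Open Scope ring_scope.

Definition borel (T : topologicalType) := g_sigma_algebraType (@open T).

Definition tuples (n : nat) (W : Type) := {ptws 'I_n -> W}.
HB.instance Definition _ n (W : topologicalType) := Topological.on (tuples n W).
HB.instance Definition _ n (W : ptopologicalType) :=
  Pointed.copy (tuples n W) ('I_n -> W).

(** Universally measurable sets: sets which are measurable for the
    completion of every Borel probability measure. *)
Definition univ_measurable (R : realType) (T : ptopologicalType) (A : set T) :=
  forall mu : probability (borel T) R,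
    exists B1 B2 : set (borel T),
      [/\ measurable B1, measurable B2, B1 `<=` A, A `<=` B2 &
          mu (B2 `\` B1) = 0%E].

Definition univ_measurable_fun (R : realType) (T U : ptopologicalType)
    (D : set T) (f : T -> U) :=
  forall B : set (borel U), measurable B ->
    univ_measurable R (D `&` f @^-1` B).

Section game.
Context (R : realType) (W X : ptopologicalType).

(** The empirical measure (1/n) sum_k delta_{v k} on W x X (n >= 1 atoms,
    indexed by 'I_n.+1). *)
Section empirical.
Context (n : nat) (v : 'I_n.+1 -> W * X).

Definition empirical_weight : {nonneg R} := ((n.+1)%:R^-1 : R)%:nng.

Definition empirical (A : set (borel (W * X)%type)) : \bar R :=
  ((n.+1)%:R^-1 : R)%:E * (\sum_(i < n.+1) \d_(v i : borel (W * X)%type) A)%E.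

Let dm : {measure set (borel (W * X)%type) -> \bar R}^nat :=
  fun k => \d_(v (inord k) : borel (W * X)%type).

Let empiricalE : empirical = mscale empirical_weight (msum dm n.+1).
Proof.
apply/funext => A; rewrite /empirical /mscale /msum /=; congr (_ * _)%E.
by apply: eq_bigr => i _; rewrite /dm inord_val.
Qed.

Let empirical0 : empirical set0 = 0%E.
Proof. by rewrite empiricalE measure0. Qed.

Let empirical_ge0 A : (0 <= empirical A)%E.
Proof. by rewrite empiricalE measure_ge0. Qed.

Let empirical_sigma_additive : semi_sigma_additive empirical.
Proof. rewrite empiricalE; exact: measure_semi_sigma_additive. Qed.

HB.instance Definition _ := isMeasure.Build _ _ _ empirical
  empirical0 empirical_ge0 empirical_sigma_additive.

Let empirical_setT : empirical [set: borel (W * X)%type] = 1%E.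
Proof.
rewrite /empirical.
under eq_bigr do rewrite diracT.
rewrite sumEFin /= -EFinM sumr_const card_ord.
by rewrite mulVf.
Qed.

HB.instance Definition _ :=
  Measure_isProbability.Build _ _ _ empirical empirical_setT.
End empirical.

(** P(W x X): Borel probability measures on W x X with the weak topology,
    i.e. the initial (coarsest) topology making mu |-> \int f dmu continuous
    for every bounded continuous f : W x X -> R. *)
Definition probWX := probability (borel (W * X)%type) R.
HB.instance Definition _ := gen_eqMixin probWX.
HB.instance Definition _ := gen_choiceMixin probWX.

Definition bcfun :=
  {f : W * X -> R | continuous f /\ exists M : R, forall p, `|f p| <= M}.

Definition integrals (mu : probWX) : {ptws bcfun -> R} :=
  fun f => Rintegral mu setT (sval f).

Definition weakP := initial_topology integrals.

Variables (C : W -> set X) (F : weakP -> W -> X -> R).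

Definition profile n (w : 'I_n.+1 -> W) (x : 'I_n.+1 -> X) : 'I_n.+1 -> W * X :=
  fun k => (w k, x k).

Definition emp n (w : 'I_n.+1 -> W) (x : 'I_n.+1 -> X) : weakP :=
  empirical (profile w x) : probWX.

Definition update n (x : 'I_n.+1 -> X) (i : 'I_n.+1) (y : X) : 'I_n.+1 -> X :=
  fun k => if k == i then y else x k.

(** N^eps_n(w): the eps-Nash equilibria with type vector w.
    Note emp w (update x i y) = m + (1/n)(delta_{(w_i,y)} - delta_{(w_i,x_i)}). *)
Definition Nash_eps (eps : R) n (w : tuples n.+1 W) : set (tuples n.+1 X) :=
  [set x : tuples n.+1 X | forall i : 'I_n.+1,
     C (w i) (x i) /\
     F (emp w x) (w i) (x i)
       - inf [set F (emp w (update x i y)) (w i) y | y in C (w i)] <= eps].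

Definition Dset (eps : R) n : set (tuples n.+1 W) :=
  [set w : tuples n.+1 W | Nash_eps eps w !=set0].

End game.
Arguments Dset {R W X} C F eps n _ : rename.

(* Main.v *)
Set Warnings "-notation-overridden,-ambiguous-paths,-notation-incompatible-prefix".
Require Import Defs.
From HB Require Import structures.
From mathcomp Require Import all_boot all_order all_algebra.
From mathcomp Require Import all_classical all_reals all_analysis.
Import Order.TTheory GRing.Theory Num.Theory.
From mathcomp Require Import lra finmap measurable_realfun.
Import numFieldTopology.Exports.
Local Open Scope classical_set_scope.
Local Open Scope ring_scope.
Section selection.
Context {R : realType} {T : ptopologicalType} {Y : pseudoMetricType R}.
Variable Phi : T -> set Y.
Hypothesis Ycomp : compact [set: Y].
Hypothesis Gcl : closed [set p : T * Y | Phi p.1 p.2].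

Lemma proj_closed (Z : set Y) : closed Z -> closed [set w | exists y, Phi w y /\ Z y].
Proof.
move=> Zcl w wcl.
pose B (V : set T) := [set y | Z y /\ exists w', V w' /\ Phi w' y].
have FF : ProperFilter (filter_from (nbhs w) B).
  apply: filter_from_proper.
    apply: filter_from_filter; first by exists setT; exact: filterT.
    move=> V1 V2 n1 n2; exists (V1 `&` V2); first exact: filterI.
    by move=> y [Zy [w' [[V1w' V2w'] Pw']]]; split; split=> //; exists w'.
  move=> V nV; have [w' [[y [Py Zy]] Vw']] := wcl V nV.
  by exists y; split=> //; exists w'.
have [y [_ cly]] := Ycomp _ FF (filterT).
have Zy : Z y.
  apply: Zcl => B' nB'.
  have [z [[Zz _] B'z]] := cly (B setT) B' (ex_intro2 _ _ setT filterT (fun _ h => h)) nB'.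
  by exists z.
exists y; split => //.
have : closure [set p : T * Y | Phi p.1 p.2] (w, y).
  move=> N [[V U'] [/= nV nU] sub].
  have [z [[Zz [w' [Vw' Pw']]] U'z]] := cly (B V) U' (ex_intro2 _ _ V nV (fun _ h => h)) nU.
  by exists (w', z); split => //; apply: sub.
by move/Gcl.
Qed.

Lemma nested_point (K : nat -> set Y) : (forall k, closed (K k)) ->
  (forall k, K k !=set0) -> (forall k, K k.+1 `<=` K k) ->
  exists y, forall k, K k y.
Proof.
move=> Kcl Kne Kdec.
have mono m k : K (m + k)%N `<=` K m.
  elim: k => [|k IH]; first by rewrite addn0.
  by rewrite addnS => y /Kdec /IH.
have FF : ProperFilter (filter_from [set: nat] K).
  apply: filter_from_proper; last by move=> k _; exact: Kne.
  apply: filter_from_filter; first by exists 0%N.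
  move=> i j _ _; exists (maxn i j) => // y Ky; split.
    by move: Ky; rewrite -(subnKC (leq_maxl i j)) => /mono.
  by move: Ky; rewrite -(subnKC (leq_maxr i j)) => /mono.
have [y [_ cly]] := Ycomp _ FF (filterT).
exists y => k; apply: Kcl => B nB.
have [z [Kz Bz]] := cly (K k) B (ex_intro2 _ _ k I (fun _ h => h)) nB.
by exists z.
Qed.


Lemma Phi_closed w : closed (Phi w).
Proof.
have -> : Phi w = (fun y => (w, y)) @^-1` [set p : T * Y | Phi p.1 p.2] by [].
apply: preimage_closed => // y _.
by apply: cvg_pair; [exact: cvg_cst | exact: cvg_id].
Qed.

Lemma closed_meas (S : set T) : closed S -> measurable (S : set (borel T)).
Proof.
move=> cS; rewrite -[S]setCK; apply: measurableC; apply: sub_sigma_algebra.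
exact: closed_openC.
Qed.

Variables (y0 : Y) (L : nat -> seq (set Y)).
Hypothesis Lcl : forall k j, closed (nth set0 (L k) j).
Hypothesis Lcov : forall k y, exists2 j, (j < size (L k))%N & nth set0 (L k) j y.
Hypothesis Lfine : forall y U, open U -> U y ->
  exists k, forall j, nth set0 (L k) j y -> nth set0 (L k) j `<=` U.

Definition pickA (K : set Y) (k : nat) : nat :=
  find (fun A => `[< K `&` A !=set0 >]) (L k).

Fixpoint Kseq (w : T) (k : nat) : set Y :=
  if k is k'.+1 then Kseq w k' `&` nth set0 (L k') (pickA (Kseq w k') k')
  else Phi w.

Definition sel (w : T) : Y := xget y0 [set y | forall k, Kseq w k y].

Lemma Kseq_closed w k : closed (Kseq w k).
Proof. by elim: k => [|k IH] /=; [exact: Phi_closed | exact: (closedI IH (Lcl _ _))]. Qed.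

Lemma Kseq_ne w k : Phi w !=set0 -> Kseq w k !=set0.
Proof.
move=> Pne; elim: k => [//|k [y Ky]] /=.
have [j jlt Ly] := Lcov k y.
have hs : has (fun A => `[< Kseq w k `&` A !=set0 >]) (L k).
  by apply/(has_nthP set0); exists j => //; apply/asboolP; exists y.
by have /asboolP := nth_find set0 hs.
Qed.

Lemma sel_in w : Phi w !=set0 -> forall k, Kseq w k (sel w).
Proof.
move=> Pne; apply: (xgetPex y0 (P := [set y | forall k, Kseq w k y])).
apply: nested_point; [exact: Kseq_closed | by move=> k; exact: Kseq_ne |].
by move=> k y [].
Qed.

Lemma Kseq_meas k : forall Z, closed Z ->
  measurable ([set w | Kseq w k `&` Z !=set0] : set (borel T)).
Proof.
elim: k => [|k IH] Z cZ.
  apply: closed_meas.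
  have -> : [set w | Kseq w 0 `&` Z !=set0] = [set w | exists y, Phi w y /\ Z y].
    by apply/seteqP; split => w [y [? ?]]; exists y.
  exact: proj_closed.
pose A j := nth set0 (L k) j.
have -> : [set w | Kseq w k.+1 `&` Z !=set0] =
  \bigcup_j ([set w | Kseq w k `&` (A j `&` Z) !=set0] `&`
     \bigcap_i (if (i < j)%N then ~` [set w | Kseq w k `&` A i !=set0] else setT)).
  apply/seteqP; split => w.
    move=> [y [[Ky Ay] Zy]]; exists (pickA (Kseq w k) k) => //; split.
      by exists y.
    move=> i _; case: ifPn => // ilt.
    have := before_find set0 ilt => /asboolPn; exact.
  move=> [j _ [[y [Ky [Ay Zy]]] hj]].
  suff pj : pickA (Kseq w k) k = j by exists y; rewrite /= pj.
  have jlt : (j < size (L k))%N.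
    rewrite ltnNge; apply/negP => jge; move: Ay; rewrite /A nth_default //.
  have aj : (fun A => `[< Kseq w k `&` A !=set0 >]) (nth set0 (L k) j).
    by apply/asboolP; exists y.
  have hs : has (fun A => `[< Kseq w k `&` A !=set0 >]) (L k).
    by apply/(has_nthP set0); exists j.
  case: (ltngtP (pickA (Kseq w k) k) j) => // h.
    have := hj (pickA (Kseq w k) k) I; rewrite h => H; exfalso; apply: H.
    by have /asboolP := nth_find set0 hs.
  by have := before_find set0 h; rewrite aj.
apply: bigcupT_measurable => j; apply: (@measurableI _ (borel T)).
  by apply: IH; exact: (closedI (Lcl k j) cZ).
apply: bigcapT_measurable => i; case: ifPn => _; last exact: measurableT.
exact: measurableC (IH _ (Lcl k i)).
Qed.


Lemma sel_preimage_open U : open U ->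
  [set w | Phi w !=set0] `&` sel @^-1` U =
  \bigcup_k ([set w | Phi w !=set0] `&` ~` [set w | Kseq w k `&` ~` U !=set0]).
Proof.
move=> oU; apply/seteqP; split => w.
  move=> [Pne Usel]; have [k hk] := Lfine _ _ oU Usel.
  exists k.+1 => //; split => // -[y [[Ky Ay] nUy]]; apply: nUy.
  have [_ As] := sel_in w Pne k.+1.
  exact: (hk _ As).
move=> [k _ [Pne hk]]; split => //.
apply: contrapT => nU; apply: hk; exists (sel w); split => //.
exact: sel_in.
Qed.

Lemma D_meas : measurable ([set w | Phi w !=set0] : set (borel T)).
Proof.
have -> : [set w | Phi w !=set0] = [set w | Kseq w 0 `&` setT !=set0].
  by apply/seteqP; split => w [y]; [move=> ?; exists y | move=> [? _]; exists y].
exact: Kseq_meas closedT.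
Qed.

Lemma sel_meas (B : set Y) : <<s @open Y >> B ->
  measurable (([set w | Phi w !=set0] `&` sel @^-1` B) : set (borel T)).
Proof.
pose D := [set w | Phi w !=set0].
apply: (@smallest_sub _ _ _ [set B | measurable ((D `&` sel @^-1` B) : set (borel T))]).
  split.
  - rewrite /= (_ : sel @^-1` set0 = set0); last by apply/seteqP; split.
    by rewrite setI0; exact: measurable0.
  - move=> A mA; rewrite /=; have -> : D `&` sel @^-1` (setT `\` A) = D `\` (D `&` sel @^-1` A).
      by apply/seteqP; split => w /=; [move=> [Dw [_ nA]]; split => // -[] | move=> [Dw nDA]; split => //; split => // Aw; apply: nDA].
    exact: measurableD D_meas mA.
  - move=> F mF; rewrite /= preimage_bigcup setI_bigcupr.
    exact: bigcupT_measurable.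
move=> U oU; rewrite /= sel_preimage_open //; apply: bigcupT_measurable => k.
apply: (@measurableI _ (borel T)); first exact: D_meas.
exact: measurableC (Kseq_meas k _ (open_closedC oU)).
Qed.

End selection.

Section finecover.
Context {R : realType} {Y : pseudoMetricType R}.
Lemma fine_cover (y0 : Y) : compact [set: Y] -> exists L : nat -> seq (set Y),
 [/\ forall k j, closed (nth set0 (L k) j),
     forall k y, exists2 j, (j < size (L k))%N & nth set0 (L k) j y &
     forall y U, open U -> U y -> exists k, forall j, nth set0 (L k) j y -> nth set0 (L k) j `<=` U].
Proof.
move=> Ycomp.
have rpos k : 0 < (k.+1%:R^-1 : R) by [].
have h k : finite_subset_cover [set: Y] (fun z => interior (ball z k.+1%:R^-1)) [set: Y].
  pose Yp : ptopologicalType := HB.pack_for ptopologicalType Y (isPointed.Build Y y0).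
  have : compact [set: Yp] := Ycomp.
  rewrite compact_cover; apply.
  - by move=> z _; exact: open_interior.
  - by move=> z _; exists z => //; rewrite /interior; exact: nbhsx_ballx.
have /choice[D hD] : forall k, exists D : {fset Y},
    [set: Y] `<=` cover [set` D] (fun z => interior (ball z k.+1%:R^-1)).
  by move=> k; have [D' _ ?] := h k; exists D'.
exists (fun k => [seq closure (ball c k.+1%:R^-1) | c <- D k]); split.
- move=> k j; case: (ltnP j (size (D k))) => jlt.
    by rewrite (nth_map y0) //; exact: closed_closure.
  by rewrite nth_default ?size_map //; exact: closed0.
- move=> k y; have [c Dc cy] := hD k y I.
  exists (index c (D k)); first by rewrite size_map index_mem.
  rewrite (nth_map y0) ?index_mem // nth_index //; apply: subset_closure.
  exact: interior_subset.
- move=> y U oU Uy; have /nbhs_ballP[e e0 sub] : nbhs y U by apply: open_nbhs_nbhs.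
  have e4 : 0 < e / 4 by apply: divr_gt0.
  have [k hk] := ltr_add_invr e4; rewrite add0r in hk.
  exists k => j; case: (ltnP j (size (D k))) => jlt; last first.
    by rewrite nth_default ?size_map.
  rewrite (nth_map y0) // => cly z clz; apply: sub.
  set c := nth y0 (D k) j; set r := k.+1%:R^-1 : R.
  have cb u : closure (ball c r) u -> ball c (r + r) u.
    move=> clu; have [v [cv uv]] := clu _ (nbhsx_ballx u r (rpos k)).
    exact: ball_triangle cv (ball_sym uv).
  have := ball_triangle (ball_sym (cb _ cly)) (cb _ clz).
  apply: le_ball; rewrite -/r in hk; lra.
Qed.
End finecover.

Section integ.
Context {R : realType} {W X : ptopologicalType}.

Lemma cont_measurable (g : W * X -> R) : continuous g ->
  measurable_fun setT (g : borel (W * X)%type -> R).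
Proof.
move=> /continuousP cg; apply: (@measurability _ _ (borel (W * X)%type) R setT g _ (measurable_realfun.RGenOpens.measurableE R)).
move=> _ [_ [a [b ->]] <-]; apply: sub_sigma_algebra; rewrite setTI.
exact/cg/interval_open.
Qed.

Lemma integral_empirical n (v : 'I_n.+1 -> W * X) (g : W * X -> R) :
  continuous g ->
  Rintegral (empirical R v : probWX R W X) setT g =
    (n.+1%:R^-1 * \sum_(i < n.+1) g (v i))%R.
Proof.
move=> cg; have mg := cont_measurable _ cg.
pose k := empirical_weight R n.
pose dm : {measure set (borel (W * X)%type) -> \bar R}^nat :=
  fun j => \d_(v (inord j) : borel (W * X)%type).
have E : (empirical R v : set (borel (W * X)%type) -> \bar R) = mscale k (msum dm n.+1).
  apply/funext => A; rewrite /empirical /mscale /msum /=; congr (_ * _)%E.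
  by apply: eq_bigr => i _; rewrite /dm inord_val.
rewrite /Rintegral.
have -> : (\int[empirical R v : probWX R W X]_(x in setT) (g x)%:E =
          \int[mscale k (msum dm n.+1)]_(x in setT) (g x)%:E)%E.
  by rewrite -E.
have mf : measurable_fun [set: borel (W * X)%type] (EFin \o g).
  exact/measurable_EFinP.
rewrite integralE.
rewrite ge0_integral_mscale //.
rewrite ge0_integral_mscale //.
rewrite ge0_integral_measure_sum //.
rewrite ge0_integral_measure_sum //.
- have hp i : (\int[dm i]_x (EFin \o g)^\+ x = (Num.max (g (v (inord i))) 0)%:E)%E.
    rewrite integral_dirac //; last exact: measurable_funepos mf.
    by rewrite diracT mul1e funeposE /= EFin_max.
  have hn i : (\int[dm i]_x (EFin \o g)^\- x = (Num.max (- g (v (inord i))) 0)%:E)%E.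
    rewrite integral_dirac //; last exact: measurable_funeneg mf.
    by rewrite diracT mul1e funenegE /= EFin_max.
  under eq_bigr do rewrite hp.
  under [X in (_ - _ * X)%E]eq_bigr do rewrite hn.
  rewrite !sumEFin -!EFinM -EFinB /= -mulrBr -sumrB; congr (_ * _).
  apply: eq_bigr => i _; rewrite inord_val.
  set x := g (v i).
  rewrite /Order.max; case: ifPn => h1; case: ifPn => h2; rewrite ?ltNge ?negbK in h1 h2; lra.
all: first [exact: measurable_funeneg mf | exact: measurable_funepos mf].
Qed.
End integ.
Lemma initial_cvg {S : choiceType} {T : topologicalType} (f : S -> T)
  (F : set_system S) (s : S) : Filter F -> f @ F --> f s ->
  F --> (s : initial_topology f).
Proof.
move=> FF cv A /= [_ [[B Bop <-] Bfs sBfA]].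
apply: (filterS sBfA); apply: cv; exact: open_nbhs_nbhs.
Qed.

Lemma ptws_cvg {I : Type} {V : topologicalType}
  (F : set_system (prod_topology (fun _ : I => V))) (t : prod_topology (fun _ : I => V)) :
  Filter F -> (forall i, (fun g => g i) @ F --> t i) -> F --> t.
Proof.
move=> FF h; apply/cvg_sup => i.
exact: initial_cvg.
Qed.

Lemma cvg_pair_nbhs {T U V : topologicalType} (f : T -> U) (g : T -> V) (t : T) :
  f @ t --> f t -> g @ t --> g t -> (fun x => (f x, g x)) @ t --> (f t, g t).
Proof. by move=> hf hg; apply: cvg_pair. Qed.

Lemma fst_cont {U V : topologicalType} : continuous (fst : U * V -> U).
Proof. by move=> [a b]; exact: cvg_fst. Qed.

Lemma snd_cont {U V : topologicalType} : continuous (snd : U * V -> V).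
Proof. by move=> [a b]; exact: cvg_snd. Qed.

Section conts.
Context {R : realType} {W X : ptopologicalType} (n : nat).

Lemma proj1_cont (i : 'I_n.+1) : continuous (fun q : tuples n.+1 W * tuples n.+1 X => q.1 i).
Proof.
move=> [a b]; apply: (cvg_comp fst (fun w : tuples n.+1 W => w i)).
  exact: cvg_fst.
exact: (@proj_continuous _ (fun _ => W) i).
Qed.

Lemma proj2_cont (i : 'I_n.+1) : continuous (fun q : tuples n.+1 W * tuples n.+1 X => q.2 i).
Proof.
move=> [a b]; apply: (cvg_comp snd (fun w : tuples n.+1 X => w i)).
  exact: cvg_snd.
exact: (@proj_continuous _ (fun _ => X) i).
Qed.

Lemma emp_cont : continuous (fun q : tuples n.+1 W * tuples n.+1 X => emp R q.1 q.2).
Proof.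
apply: (@continuous_comp_initial _ _ _ (@integrals R W X)).
move=> q; apply: ptws_cvg => f.
have cf : continuous (sval f) := (svalP f).1.
have E x : (integrals (emp R x.1 x.2)) f =
    n.+1%:R^-1 * \sum_(i < n.+1) sval f (x.1 i, x.2 i).
  exact: integral_empirical _ cf.
change ((fun x => (integrals (emp R x.1 x.2)) f) @ q --> (integrals (emp R q.1 q.2)) f).
rewrite (eq_cvg _ _ E) E.
apply: cvgMl_tmp.
apply: (@cvg_big _ _ +%R 0 xpredT add_continuous) => i _.
apply: (cvg_comp (fun x : tuples n.+1 W * tuples n.+1 X => (x.1 i, x.2 i)) (sval f)); last exact: cf.
by apply: cvg_pair; [exact: proj1_cont | exact: proj2_cont].
Qed.

Lemma update_cont (i : 'I_n.+1) :
  continuous (fun q : tuples n.+1 X * X => (update q.1 i q.2 : tuples n.+1 X)).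
Proof.
move=> [a b]; apply: ptws_cvg => k.
change ((fun q : tuples n.+1 X * X => update q.1 i q.2 k) @ (a, b) --> update a i b k).
rewrite /update; case: eqP => _.
  exact: cvg_snd.
apply: (cvg_comp fst (fun w : tuples n.+1 X => w k)); first exact: cvg_fst.
exact: (@proj_continuous _ (fun _ => X) k).
Qed.

Lemma Psi_cont (i : 'I_n.+1) :
  continuous (fun p : tuples n.+1 W * tuples n.+1 X => (p.1 i, p.2 i)).
Proof. by move=> p; apply: cvg_pair; [exact: proj1_cont | exact: proj2_cont]. Qed.

Lemma G1_cont (F : weakP R W X -> W -> X -> R)
  (F_continuous : continuous (fun p : weakP R W X * W * X => F p.1.1 p.1.2 p.2))
  (i : 'I_n.+1) :
  continuous (fun p : tuples n.+1 W * tuples n.+1 X => F (emp R p.1 p.2) (p.1 i) (p.2 i)).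
Proof.
have h : continuous (fun p : tuples n.+1 W * tuples n.+1 X => ((emp R p.1 p.2, p.1 i), p.2 i)).
  move=> p.
  have h1 : (fun p0 : tuples n.+1 W * tuples n.+1 X => (emp R p0.1 p0.2, p0.1 i)) @ p --> (emp R p.1 p.2, p.1 i).
    exact: (@cvg_pair _ _ _ (nbhs p) (nbhs (emp R p.1 p.2)) (nbhs (p.1 i)) _ _ _ _ _ (emp_cont p) (proj1_cont i p)).
  exact: (@cvg_pair _ _ _ (nbhs p) (nbhs (emp R p.1 p.2, p.1 i)) (nbhs (p.2 i)) _ _ _ _ _ h1 (proj2_cont i p)).
move=> p; exact: (continuous_comp (h p) (F_continuous _)).
Qed.

Lemma G2_cont (F : weakP R W X -> W -> X -> R)
  (F_continuous : continuous (fun p : weakP R W X * W * X => F p.1.1 p.1.2 p.2))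
  (i : 'I_n.+1) :
  continuous (fun r : (tuples n.+1 W * tuples n.+1 X) * X =>
    F (emp R r.1.1 (update r.1.2 i r.2)) (r.1.1 i) r.2).
Proof.
have h11 : continuous (fun r : (tuples n.+1 W * tuples n.+1 X) * X => r.1.1).
  move=> r; exact: (continuous_comp (fst_cont r) (fst_cont _)).
have h12 : continuous (fun r : (tuples n.+1 W * tuples n.+1 X) * X => r.1.2).
  move=> r; exact: (continuous_comp (fst_cont r) (snd_cont _)).
have h2 : continuous (fun r : (tuples n.+1 W * tuples n.+1 X) * X => (r.1.2, r.2)).
  move=> r; apply: cvg_pair_nbhs; [exact: h12 | exact: snd_cont].
have hup : continuous (fun r : (tuples n.+1 W * tuples n.+1 X) * X => (update r.1.2 i r.2 : tuples n.+1 X)).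
  move=> r; exact: (continuous_comp (h2 r) (update_cont i _)).
have hu : continuous (fun r : (tuples n.+1 W * tuples n.+1 X) * X =>
    (r.1.1, (update r.1.2 i r.2 : tuples n.+1 X))).
  move=> r; apply: cvg_pair_nbhs; [exact: h11 | exact: hup].
have he : continuous (fun r : (tuples n.+1 W * tuples n.+1 X) * X =>
    emp R r.1.1 (update r.1.2 i r.2)).
  move=> r; exact: (continuous_comp (hu r) (emp_cont _)).
have h1 : continuous (fun r : (tuples n.+1 W * tuples n.+1 X) * X => r.1.1 i).
  move=> r; exact: (continuous_comp (fst_cont r) (proj1_cont i _)).
have h : continuous (fun r : (tuples n.+1 W * tuples n.+1 X) * X =>
    ((emp R r.1.1 (update r.1.2 i r.2), r.1.1 i), r.2)).
  move=> r; apply: cvg_pair_nbhs; last exact: snd_cont.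
  by apply: cvg_pair_nbhs; [exact: he | exact: h1].
move=> r; exact: (continuous_comp (h r) (F_continuous _)).
Qed.

End conts.

Section main.
Context {R : realType} {W X : pseudoPMetricType R} (C : W -> set X)
  (F : weakP R W X -> W -> X -> R).
Hypothesis C_nonempty : forall w, C w !=set0.
Hypothesis C_graph_closed : closed [set p : W * X | C p.1 p.2].
Hypothesis C_lower : forall (w_ : nat -> W) (w : W) (x : X),
     w_ @ \oo --> w -> C w x ->
     exists (phi : nat -> nat) (x_ : nat -> X),
       [/\ {homo phi : k l / (k < l)%N >-> (k < l)%N},
           forall k, C (w_ (phi k)) (x_ k) &
           x_ @ \oo --> x].
Hypothesis F_bounded : exists M : R, forall m w x, `|F m w x| <= M.
Hypothesis F_continuous :
  continuous (fun p : weakP R W X * W * X => F p.1.1 p.1.2 p.2).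
Variables (n : nat) (eps : R).

Lemma graph_closed :
  closed [set p : tuples n.+1 W * tuples n.+1 X | Nash_eps C F eps p.1 p.2].
Proof.
move=> [w x] cl.
have rpos k : 0 < (k.+1%:R^-1 : R) by [].
have /choice[q hq] : forall k : nat, exists q : tuples n.+1 W * tuples n.+1 X,
    Nash_eps C F eps q.1 q.2 /\ ball (w, x) k.+1%:R^-1 q.
  move=> k; have [q [Gq bq]] := cl _ (nbhsx_ballx (w, x) _ (rpos k)).
  by exists q.
have qcv : q @ \oo --> (w, x).
  apply/cvg_ballP => e e0.
  have [N _ hN] := near_infty_natSinv_lt (PosNum e0).
  exists N => // k /= Nk; apply: (le_ball (ltW (hN k Nk))); exact: (hq k).2.
move=> i; rewrite /=.
have Psi_c := @Psi_cont W X n i.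
split.
  apply: (closed_cvg _ C_graph_closed _ _ (cvg_comp q _ qcv (Psi_c (w, x)))).
  by apply: nearW => k; exact: ((hq k).1 i).1.
have [M hM] := F_bounded.
have lb (w' : tuples n.+1 W) (x' : tuples n.+1 X) :
    has_lbound [set F (emp R w' (update x' i y)) (w' i) y | y in C (w' i)].
  exists (- M) => _ [y _ <-]; have := hM (emp R w' (update x' i y)) (w' i) y.
  by rewrite ler_norml => /andP[].
apply/ler_addgt0Pr => d d0.
have hinf : has_inf [set F (emp R w (update x i y)) (w i) y | y in C (w i)].
  split; last exact: lb.
  by have [y Cy] := C_nonempty (w i); exists (F (emp R w (update x i y)) (w i) y), y.
have [_ [ys Cys <-] ysI] := inf_adherent d0 hinf.
have wcv : (fun k => (q k).1 i) @ \oo --> w i.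
  exact: (cvg_comp q _ qcv (@proj1_cont W X n i (w, x))).
have [phi [y_ [phiinc Cy ycv]]] := C_lower _ _ _ wcv Cys.
have phige k : (k <= phi k)%N.
  elim: k => [//|k IH]; exact: leq_ltn_trans IH (phiinc _ _ (ltnSn k)).
have phioo : phi @ \oo --> \oo.
  by move=> A [N _ hA]; exists N => // k /= Nk; apply: hA; exact: leq_trans Nk (phige k).
have qphi : (q \o phi) @ \oo --> (w, x) := cvg_comp _ _ phioo qcv.
pose G1 (p : tuples n.+1 W * tuples n.+1 X) := F (emp R p.1 p.2) (p.1 i) (p.2 i).
have G1cont : continuous G1 := @G1_cont R W X n F F_continuous i.
pose G2 (r : (tuples n.+1 W * tuples n.+1 X) * X) :=
  F (emp R r.1.1 (update r.1.2 i r.2)) (r.1.1 i) r.2.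
have G2cont : continuous G2 := @G2_cont R W X n F F_continuous i.
have acv : (G1 \o q \o phi) @ \oo --> G1 (w, x) := cvg_comp _ _ qphi (G1cont (w, x)).
have bcv : (fun k => G2 (q (phi k), y_ k)) @ \oo --> G2 ((w, x), ys).
  exact: (cvg_comp (fun k => (q (phi k), y_ k)) G2 (cvg_pair qphi ycv) (G2cont ((w, x), ys))).
have cle : G1 (w, x) - G2 ((w, x), ys) <= eps.
  have hc : (fun k => G1 (q (phi k)) - G2 (q (phi k), y_ k)) @ \oo --> G1 (w, x) - G2 ((w, x), ys).
    exact: (cvgB acv bcv).
  apply: (closed_cvg [set r : R | r <= eps] (@closed_le R eps) _ _ hc).
  apply: nearW => k /=.
  have [_ hk] := (hq (phi k)).1 i.
  have hinfk := ge_inf (lb (q (phi k)).1 (q (phi k)).2) (ex_intro2 _ _ (y_ k) (Cy k) erefl).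
  rewrite /G1 /G2 /=; lra.
rewrite /G1 /G2 /= in cle; lra.
Qed.
End main.

Lemma selection_thm {R : realType} {T : ptopologicalType} {Y : pseudoMetricType R}
  (Phi : T -> set Y) (y0 : Y) :
  compact [set: Y] -> closed [set p : T * Y | Phi p.1 p.2] ->
  exists f : T -> Y, (forall w, Phi w !=set0 -> Phi w (f w)) /\
    (forall B, <<s @open Y >> B ->
       measurable (([set w | Phi w !=set0] `&` f @^-1` B) : set (borel T))).
Proof.
move=> Ycomp Gcl.
have [L [Lcl Lcov Lfine]] := fine_cover y0 Ycomp.
exists (sel Phi y0 L); split.
  by move=> w Pne; have := sel_in Phi Ycomp Gcl y0 L Lcl Lcov w Pne 0.
move=> B mB; exact: (sel_meas Phi Ycomp Gcl y0 L Lcl Lcov Lfine B mB).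
Qed.

Theorem lemma3p4 (R : realType) (W X : pseudoPMetricType R)
  (* X is a compact metric space *)
  (X_hausdorff : hausdorff_space X) (X_compact : compact [set: X])
  (* W is a complete separable metric space *)
  (W_hausdorff : hausdorff_space W)
  (W_complete : forall G : set_system W, ProperFilter G -> cauchy G ->
                  exists w : W, G --> w)
  (W_separable : exists S : set W, countable S /\ closure S = [set: W])
  (C : W -> set X)
  (C_nonempty : forall w, C w !=set0)
  (C_closed : forall w, closed (C w))
  (C_graph_closed : closed [set p : W * X | C p.1 p.2])
  (C_lower : forall (w_ : nat -> W) (w : W) (x : X),
     w_ @ \oo --> w -> C w x ->
     exists (phi : nat -> nat) (x_ : nat -> X),
       [/\ {homo phi : k l / (k < l)%N >-> (k < l)%N},
           forall k, C (w_ (phi k)) (x_ k) &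
           x_ @ \oo --> x])
  (F : weakP R W X -> W -> X -> R)
  (F_bounded : exists M : R, forall m w x, `|F m w x| <= M)
  (F_continuous : continuous (fun p : weakP R W X * W * X => F p.1.1 p.1.2 p.2))
  (n : nat) (eps : R) (eps_ge0 : 0 <= eps) :
  closed (Dset C F eps n) /\
  exists xhat : tuples n.+1 W -> tuples n.+1 X,
    univ_measurable_fun R (Dset C F eps n) xhat /\
    forall w, Dset C F eps n w -> Nash_eps C F eps w (xhat w).
Proof.
have Gcl := @graph_closed R W X C F C_nonempty C_graph_closed C_lower F_bounded F_continuous n eps.
have Ycomp : compact [set: tuples n.+1 X].
  have := @tychonoff 'I_n.+1 (fun _ => X) (fun _ => [set: X]) (fun _ => X_compact).
  have -> : [set f : 'I_n.+1 -> X | forall i, [set: X] (f i)] = [set: 'I_n.+1 -> X].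
    by apply/seteqP; split.
  exact.
have [f [fin fmeas]] := @selection_thm R _ (tuples n.+1 X)
  (fun w : tuples n.+1 W => Nash_eps C F eps w) point Ycomp Gcl.
split.
  have := proj_closed (fun w : tuples n.+1 W => Nash_eps C F eps w) Ycomp Gcl _ closedT.
  have -> : [set w | exists y, Nash_eps C F eps w y /\ [set: tuples n.+1 X] y] =
      Dset C F eps n.
    by apply/seteqP; split => w [y]; [move=> [? _]; exists y | move=> ?; exists y].
  exact.
exists f; split; last by move=> w /fin.
move=> B mB mu.
have mD := fmeas B mB.
exists (Dset C F eps n `&` f @^-1` B), (Dset C F eps n `&` f @^-1` B); split => //.
by rewrite setDv measure0.
Qed.
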